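(* Let $X\in\mathbb{R}^{m\times d}$ be the matrix whose rows are $x_1,\dots,x_m\in\mathbb{R}^d$, and let $\gamma>0$. The set $\{x_1,\dots,x_m\}$ is $\gamma$-shattered at the origin by $\mathcal{W}$ if and only if $XX^T$ is invertible and $y^T(XX^T)^{-1}y\le\gamma^{-2}$ for all $y\in\{\pm1\}^m$.
   Context: $\mathcal{W}=\{x\mapsto\langle w,x\rangle\mid w\in\mathbb{R}^d,\|w\|\le1\}$. A set $\{x_1,\dots,x_m\}$ is $\gamma$-shattered at the origin by $\mathcal{W}$ if for every $y\in\{\pm1\}^m$ there is $w$ with $\|w\|\le1$ and $y[i]\langle w,x_i\rangle\ge\gamma$ for all $i\in[m]$. *)

(* Defs.v *)
(* R is an arbitrary real closed field (covers the reals). *)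
From HB Require Import structures.
From mathcomp Require Import all_boot all_order all_algebra.
Set Implicit Arguments. Unset Strict Implicit. Unset Printing Implicit Defensive.
Import Order.TTheory GRing.Theory Num.Theory.
Local Open Scope ring_scope.

Definition inner (R : rcfType) (d : nat) (w x : 'rV[R]_d) : R :=
  \sum_(j < d) w 0 j * x 0 j.

Definition vnorm (R : rcfType) (d : nat) (w : 'rV[R]_d) : R :=
  Num.sqrt (\sum_(j < d) w 0 j ^+ 2).

Definition sign_vec (R : rcfType) (m : nat) (y : 'I_m -> R) : Prop :=
  forall i, y i = 1 \/ y i = -1.

(* {x_1,...,x_m} is gamma-shattered at the origin by W = {x |-> <w,x> : ||w|| <= 1} *)
Definition shattered_at_origin (R : rcfType) (m d : nat)
    (x : 'I_m -> 'rV[R]_d) (gamma : R) : Prop :=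
  forall y : 'I_m -> R, sign_vec y ->
    exists w : 'rV[R]_d, vnorm w <= 1 /\ forall i, gamma <= y i * inner w (x i).

(* Main.v *)
Require Import Defs.
From HB Require Import structures.
From mathcomp Require Import all_boot all_order all_algebra.
From mathcomp Require Import ring lra.
Import Order.TTheory GRing.Theory Num.Theory.
Local Open Scope ring_scope.

Lemma fin_max (R : rcfType) (I : finType) (i0 : I) (F : I -> R) :
  exists i, forall j, F j <= F i.
Proof.
case: (@arg_maxP _ R I i0 predT F isT) => i _ H.
by exists i => j; apply: H.
Qed.

Lemma inner_row (R : rcfType) m d (X : 'M[R]_(m,d)) (w : 'rV[R]_d) i :
  inner w (row i X) = (X *m w^T) i 0.
Proof. rewrite /inner !mxE; apply: eq_bigr => j _; by rewrite !mxE mulrC. Qed.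

Lemma vnorm_le1 (R : rcfType) d (w : 'rV[R]_d) :
  (vnorm w <= 1) = ((w *m w^T) 0 0 <= 1).
Proof.
have -> : (w *m w^T) 0 0 = \sum_(j < d) w 0 j ^+ 2.
  by rewrite mxE; apply: eq_bigr => j _; rewrite !mxE expr2.
by rewrite /vnorm -{1}sqrtr1 ler_sqrt.
Qed.

Lemma sq_ge0 (R : rcfType) d (r : 'rV[R]_d) : 0 <= (r *m r^T) 0 0.
Proof.
rewrite mxE; apply: sumr_ge0 => j _; rewrite !mxE -expr2; exact: sqr_ge0.
Qed.

Lemma mx11_tr (R : rcfType) (M : 'M[R]_1) : M^T 0 0 = M 0 0.
Proof. by rewrite mxE. Qed.

Lemma dir_back (R : rcfType) (m d : nat) (X : 'M[R]_(m, d))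
    (gamma : R) (hgamma : 0 < gamma) :
  X *m X^T \in unitmx ->
  (forall y : 'cV[R]_m, sign_vec (fun i => y i 0) ->
     (y^T *m invmx (X *m X^T) *m y) 0 0 <= gamma ^- 2) ->
  shattered_at_origin (fun i : 'I_m => row i X) gamma.
Proof.
move=> hU hB y hy.
set A := invmx (X *m X^T).
pose yc : 'cV[R]_m := \col_i y i.
have hyc : sign_vec (fun i => yc i 0) by move=> i; rewrite mxE.
pose w := gamma *: (yc^T *m A^T *m X).
have hXw : X *m w^T = gamma *: yc.
  rewrite /w linearZ /= !trmx_mul !trmxK -scalemxAr !mulmxA mulmxV //.
  by rewrite mul1mx.
exists w; split.
  rewrite vnorm_le1.
  have -> : w *m w^T = gamma *: (yc^T *m A^T *m (gamma *: yc)).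
    by rewrite -hXw {1}/w -scalemxAl !mulmxA.
  rewrite -scalemxAr scalerA mxE.
  have -> : (yc^T *m A^T *m yc) 0 0 = (yc^T *m A *m yc) 0 0.
    by rewrite -[LHS]mx11_tr !trmx_mul !trmxK mulmxA.
  have hq := hB _ hyc.
  have hg2 : 0 < gamma ^+ 2 by rewrite exprn_gt0.
  rewrite -expr2.
  rewrite -(ler_pM2l hg2) mulrV ?unitfE ?gt_eqF // in hq.
move=> i; rewrite inner_row hXw !mxE.
by case: (hy i) => ->; rewrite ?mulNr ?mul1r ?mulrN ?opprK ?mulr1.
Qed.

Lemma dir_unit (R : rcfType) (m d : nat) (X : 'M[R]_(m, d))
    (gamma : R) (hgamma : 0 < gamma) :
  shattered_at_origin (fun i : 'I_m => row i X) gamma ->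
  X *m X^T \in unitmx.
Proof.
move=> hS; rewrite unitmxE unitfE; apply/negP => /det0P [c cn0 cG].
have cX0 : c *m X = 0.
  have h0 : ((c *m X) *m (c *m X)^T) 0 0 = 0.
    by rewrite trmx_mul !mulmxA -(mulmxA c) cG mul0mx mxE.
  apply/matrixP => i j; rewrite mxE.
  have := h0; rewrite mxE => /eqP; rewrite psumr_eq0; last first.
    by move=> k _; rewrite !mxE -expr2 sqr_ge0.
  move=> /allP /(_ j (mem_index_enum _)) /implyP /(_ isT).
  by rewrite !mxE -expr2 sqrf_eq0 (ord1 i) => /eqP.
pose y := fun i => if 0 <= c 0 i then 1 else -1 : R.
have hy : sign_vec y by move=> i; rewrite /y; case: ifP => _; [left|right].
case: (hS y hy) => w [_ hw].
have hz : ((c *m X) *m w^T) 0 0 = 0 by rewrite cX0 mul0mx mxE.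
move: hz; rewrite -mulmxA mxE.
have hterm : forall i, gamma * `|c 0 i| <= c 0 i * (X *m w^T) i 0.
  move=> i; have := hw i; rewrite inner_row /y.
  case: ifP => hc; rewrite ?mul1r => h.
    by rewrite ger0_norm // mulrC ler_wpM2l.
  rewrite ltr0_norm ?ltNge ?hc // mulrN -mulNr mulrC.
  have hc' : c 0 i < 0 by rewrite ltNge hc.
  rewrite mulN1r in h; nra.
have : exists i, c 0 i != 0.
  apply/existsP; apply: contraR cn0 => /existsPn h.
  by apply/eqP/matrixP => a b; rewrite (ord1 a) mxE; apply/eqP; move/negP: (h b); case: (c 0 b == 0).
case=> i0 hi0.
have hpos : 0 < \sum_i gamma * `|c 0 i|.
  rewrite (bigD1 i0) //= ltr_pwDl ?mulr_gt0 ?normr_gt0 //.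
  by apply: sumr_ge0 => i _; rewrite mulr_ge0 // ltW.
have hle : \sum_i gamma * `|c 0 i| <= \sum_i c 0 i * (X *m w^T) i 0.
  by apply: ler_sum => i _; exact: hterm i.
move=> heq; rewrite heq in hle.
by have := lt_le_trans hpos hle; rewrite ltxx.
Qed.

Lemma flipQ (R : rcfType) m (A : 'M[R]_m) (hA : A^T = A) (y : 'cV[R]_m) i
  (hyi : y i 0 ^+ 2 = 1) :
  let y' := y - (2 * y i 0) *: delta_mx i 0 in
  (y'^T *m A *m y') 0 0 =
  (y^T *m A *m y) 0 0 - 4 * (y i 0 * (A *m y) i 0) + 4 * A i i.
Proof.
move=> y'.
set c := 2 * y i 0.
have e1 : (y^T *m A *m (delta_mx i 0 : 'cV_m)) 0 0 = (A *m y) i 0.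
  rewrite -colE mxE -[y^T *m A]trmxK trmx_mul trmxK hA mxE //.
have e2 : ((delta_mx 0 i : 'rV_m) *m A *m y) 0 0 = (A *m y) i 0.
  by rewrite -mulmxA -rowE mxE.
have e3 : ((delta_mx 0 i : 'rV_m) *m A *m (delta_mx i 0 : 'cV_m)) 0 0 = A i i.
  by rewrite -rowE -colE !mxE.
have hT : y'^T = y^T - c *: (delta_mx 0 i : 'rV_m).
  by apply/matrixP => a b; rewrite /y' !mxE andbC.
rewrite hT /y' -/c !(mulmxBl, mulmxBr).
rewrite -!scalemxAl -!scalemxAr.
move: e1 e2 e3.
move: (y^T *m A *m y) (y^T *m A *m (delta_mx i 0 : 'cV_m))
  ((delta_mx 0 i : 'rV_m) *m A *m y) ((delta_mx 0 i : 'rV_m) *m A *m (delta_mx i 0 : 'cV_m)).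
move=> P Q1 Q2 Q3 e1 e2 e3.
rewrite !(mxE, scalerA) e1 e2 e3.
have hc2 : c * c = 4.
  rewrite /c (_ : 2 * y i 0 * (2 * y i 0) = 4 * y i 0 ^+ 2); last by ring.
  by rewrite hyi mulr1.
rewrite [(A *m y) i 0]mxE [c * (c * _)]mulrA hc2 /c; ring.
Qed.

Lemma dir_bound (R : rcfType) (m d : nat) (X : 'M[R]_(m, d))
    (gamma : R) (hgamma : 0 < gamma) :
  shattered_at_origin (fun i : 'I_m => row i X) gamma ->
  X *m X^T \in unitmx ->
  forall y : 'cV[R]_m, sign_vec (fun i => y i 0) ->
     (y^T *m invmx (X *m X^T) *m y) 0 0 <= gamma ^- 2.
Proof.
move=> hS hU.
set G := X *m X^T; set A := invmx G.
have hA : A^T = A by rewrite /A trmx_inv /G trmx_mul trmxK.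
have hGA : G *m A = 1%:M by rewrite /A mulmxV.
have hAii : forall i, 0 <= A i i.
  move=> i.
  have -> : A = (A *m X) *m (A *m X)^T.
    rewrite trmx_mul hA !mulmxA -(mulmxA A X) -/G -(mulmxA A G) hGA.
    by rewrite mulmx1.
  rewrite mxE; apply: sumr_ge0 => j _; rewrite [Y in _ * Y]mxE -expr2.
  exact: sqr_ge0.
pose sv (b : {ffun 'I_m -> bool}) : 'cV[R]_m := \col_i (if b i then 1 else -1).
pose Q (y : 'cV[R]_m) := (y^T *m A *m y) 0 0.
have [bmax hmax] := @fin_max R _ [ffun => true] (fun b => Q (sv b)).
have hn1 : ((-1 : R) == 1) = false by apply: lt_eqF; lra.
suff hfin : Q (sv bmax) <= gamma ^- 2.
  move=> y hy.
  have -> : y = sv [ffun i => y i 0 == 1].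
    apply/matrixP => i j; rewrite (ord1 j) !mxE ffunE.
    by case: (hy i) => ->; rewrite ?eqxx ?hn1.
  exact: le_trans (hmax _) hfin.
set ys := sv bmax.
have hys2 : forall i, ys i 0 ^+ 2 = 1.
  by move=> i; rewrite mxE; case: (bmax i); rewrite ?sqrrN expr1n.
have hkey : forall i, 0 <= ys i 0 * (A *m ys) i 0.
  move=> i.
  pose b' := [ffun j => if j == i then ~~ bmax j else bmax j].
  have hb' : sv b' = ys - (2 * ys i 0) *: delta_mx i 0.
    apply/matrixP => a b; rewrite (ord1 b) !mxE ffunE.
    case: (eqVneq a i) => [->|hne]; rewrite ?eqxx.
      by case: (bmax i) => /=; rewrite mulr1; lra.
    by rewrite /= mulr0 subr0.
  have := hmax b'; rewrite /Q hb' flipQ //.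
  have := hAii i; lra.
have [w [hw hwi]] := hS (fun i => ys i 0)
  (fun i => ltac:(rewrite /ys /sv mxE; case: (bmax i); [left|right]; done)).
rewrite vnorm_le1 in hw.
set u := A *m ys.
set z := X^T *m u.
have f2 : (z^T *m z) 0 0 = Q ys.
  rewrite /z /u !trmx_mul hA trmxK !mulmxA -(mulmxA (ys^T *m A) X) -/G.
  by rewrite -(mulmxA (ys^T *m A) G) hGA mulmx1.
have hsg : forall k, ys k 0 = 1 \/ ys k 0 = -1.
  by move=> k; rewrite /ys /sv mxE; case: (bmax k); [left|right].
have f3 : gamma * Q ys <= (w *m z) 0 0.
  have -> : Q ys = \sum_k ys k 0 * u k 0.
    by rewrite /Q -mulmxA -/u mxE; apply: eq_bigr => k _; rewrite mxE.
  have -> : (w *m z) 0 0 = \sum_k (X *m w^T) k 0 * u k 0.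
    rewrite /z mulmxA (_ : w *m X^T = (X *m w^T)^T); last by rewrite trmx_mul trmxK.
    by rewrite mxE; apply: eq_bigr => k _; rewrite mxE.
  rewrite mulr_sumr; apply: ler_sum => k _.
  have h1 := hwi k; rewrite inner_row in h1.
  have h2 := hkey k; rewrite -/u in h2.
  have h3 := ler_wpM2r h2 h1.
  have e : (ys k 0 * (X *m w^T) k 0) * (ys k 0 * u k 0) = (X *m w^T) k 0 * u k 0.
    by rewrite mulrACA -expr2 hys2 mul1r.
  by rewrite -e.
pose r := w - gamma *: z^T.
have f4 := @sq_ge0 R d r.
have er : (r *m r^T) 0 0 = (w *m w^T) 0 0 - gamma * (w *m z) 0 0
     - gamma * (w *m z) 0 0 + gamma * (gamma * (z^T *m z) 0 0).
  have hrT : r^T = w^T - gamma *: z by apply/matrixP => a b; rewrite !mxE.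
  rewrite hrT /r !(mulmxBl, mulmxBr) -!scalemxAl -!scalemxAr.
  have e5 : (z^T *m w^T) 0 0 = (w *m z) 0 0.
    by rewrite -[RHS]mx11_tr (trmx_mul w z).
  move: e5; move: (w *m w^T) (w *m z) (z^T *m w^T) (z^T *m z) => P1 P2 P3 P4 e5.
  rewrite !(mxE, scalerA) e5; ring.
rewrite er f2 in f4.
have hg2 : 0 < gamma ^+ 2 by rewrite exprn_gt0.
have hq : gamma ^+ 2 * Q ys <= 1.
  have h5 : 0 <= gamma * ((w *m z) 0 0 - gamma * Q ys).
    by rewrite mulr_ge0 ?subr_ge0 // ltW.
  move: h5 f4 hw; rewrite expr2.
  move: (Q ys) ((w *m z) 0 0) ((w *m w^T) 0 0) => q b a; nra.
by rewrite -(ler_pM2l hg2) mulrV ?unitfE ?gt_eqF.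
Qed.

Theorem mainTheorem6 (R : rcfType) (m d : nat) (X : 'M[R]_(m, d))
    (gamma : R) (hgamma : 0 < gamma) :
  shattered_at_origin (fun i : 'I_m => row i X) gamma <->
  (X *m X^T \in unitmx /\
   forall y : 'cV[R]_m, sign_vec (fun i => y i 0) ->
     (y^T *m invmx (X *m X^T) *m y) 0 0 <= gamma ^- 2).
Proof.
split.
  move=> hS; have hU := @dir_unit R m d X gamma hgamma hS.
  by split => //; apply: (@dir_bound R m d X gamma hgamma).
by case=> hU hB; apply: (@dir_back R m d X gamma hgamma).
Qed.
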